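(* Let $h^\star:\mathbb R\to[0,1]$ be non-decreasing. Let $A\subseteq B$ be finite multisets of real numbers, and let $k,\ell$ be integers with $k\le|A|$ and $k\le\ell\le|B|$. Let $A_k$ be the multiset of the $k$ largest elements of $A$ and $B_\ell$ the multiset of the $\ell$ largest elements of $B$. Then \[ 1-\prod_{r\in B_\ell}\big(1-h^\star(r)\big)\ge1-\prod_{r\in A_k}\big(1-h^\star(r)\big). \] *)

(* Defs.v *)
From mathcomp Require Import all_boot all_order all_algebra.
From mathcomp Require Import reals.
Set Implicit Arguments. Unset Strict Implicit. Unset Printing Implicit Defensive.
Import Order.TTheory GRing.Theory Num.Theory.
Local Open Scope ring_scope.

(* Finite multisets of reals are represented by sequences (order irrelevant). *)

Definition submultiset (R : realType) (A B : seq R) : Prop :=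
  forall x : R, (count_mem x A <= count_mem x B)%N.

Definition largest (R : realType) (k : nat) (s : seq R) : seq R :=
  take k (sort (fun x y : R => y <= x) s).

(* Main.v *)
Require Import Defs.
From mathcomp Require Import all_boot all_order all_algebra.
From mathcomp Require Import reals.
Import Order.TTheory GRing.Theory Num.Theory.
Local Open Scope ring_scope.

Section Aux.
Variable R : realType.
Let ge := (fun x y : R => y <= x).

Lemma ge_trans : transitive ge.
Proof. by move=> x y z /= h1 h2; apply: le_trans h2 h1. Qed.

Lemma sub_count (A B : seq R) (p : pred R) :
  (forall x, (count_mem x A <= count_mem x B)%N) -> (count p A <= count p B)%N.
Proof.
elim: A B => [|a A IH] B H /=; first by [].
have aB : a \in B.
  have := H a; rewrite /= eqxx add1n => /(leq_trans (ltn0Sn _)).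
  by rewrite -has_count has_pred1.
have pB := perm_to_rem aB.
rewrite (permP pB) /= leq_add2l; apply: IH => x.
have := H x; rewrite (permP pB) /= eq_sym.
by case: (x == a) => //=; rewrite !add1n ltnS.
Qed.

Lemma sorted_count_nth (t : seq R) (y : R) (i : nat) :
  sorted ge t -> (i < count (fun z => (y <= z)%R) t)%N -> y <= nth 0 t i.
Proof.
elim: t i => [|a t IH] i //= st.
have all_a := order_path_min ge_trans st.
case: i => [|i] /=.
  move=> hc; have : has (fun z => (y <= z)%R) (a :: t) by rewrite has_count.
  case/hasP => z; rewrite inE => /orP[/eqP -> //| zt yz].
  by apply: le_trans yz _; move/allP: all_a => /(_ z zt).
move=> hc; apply: IH; first exact: path_sorted st.
by move: hc; case: (y <= a) => /=; rewrite ?add1n ?add0n ?ltnS // => /ltnW.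
Qed.

Lemma sorted_nth_count (t : seq R) (i : nat) :
  sorted ge t -> (i < size t)%N -> (i < count (fun z => (nth 0 t i <= z)%R) t)%N.
Proof.
elim: t i => [|a t IH] i //= st.
have all_a := order_path_min ge_trans st.
case: i => [|i] /=; first by rewrite lexx.
rewrite ltnS => it.
have -> : nth 0 t i <= a by move/allP: all_a; apply; exact: mem_nth.
by rewrite add1n ltnS; apply: IH => //; exact: path_sorted st.
Qed.

Lemma nth_largest_le (A B : seq R) i :
  (forall x, (count_mem x A <= count_mem x B)%N) -> (i < size A)%N ->
  nth 0 (sort ge A) i <= nth 0 (sort ge B) i.
Proof.
move=> H iA.
have sA : sorted ge (sort ge A) by apply: sort_sorted => x y /=; exact: le_total.
have sB : sorted ge (sort ge B) by apply: sort_sorted => x y /=; exact: le_total.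
apply: sorted_count_nth => //.
rewrite count_sort; apply: (@leq_trans (count (fun z => (nth 0 (sort ge A) i <= z)%R) A)); last exact: sub_count.
rewrite -(count_sort ge); apply: sorted_nth_count => //.
by rewrite size_sort.
Qed.
End Aux.

Theorem lemma5 (R : realType) (h : R -> R)
  (h_mono : {homo h : x y / x <= y})
  (h_range : forall x : R, 0 <= h x <= 1)
  (A B : seq R) (AB : submultiset A B)
  (k l : nat) (hkA : (k <= size A)%N) (hkl : (k <= l)%N) (hlB : (l <= size B)%N) :
  1 - \prod_(r <- largest k A) (1 - h r) <= 1 - \prod_(r <- largest l B) (1 - h r).
Proof.
rewrite lerD2l lerN2 /largest.
set sA := sort _ A; set sB := sort _ B.
have f01 : forall x, 0 <= 1 - h x <= 1.
  by move=> x; have /andP[h0 h1] := h_range x; rewrite subr_ge0 h1 lerBlDr lerDl h0.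
rewrite (big_nth 0) [X in _ <= X](big_nth 0) !size_take !size_sort.
have -> : (if (k < size A)%N then k else size A) = k.
  by case: ifP => // /negbT; rewrite -leqNgt => H; apply/eqP; rewrite eqn_leq H hkA.
have -> : (if (l < size B)%N then l else size B) = l.
  by case: ifP => // /negbT; rewrite -leqNgt => H; apply/eqP; rewrite eqn_leq H hlB.
rewrite (big_cat_nat (leq0n k) hkl) /=.
have P0 : 0 <= \prod_(0 <= i < k) (1 - h (nth 0 (take l sB) i)).
  by apply: prodr_ge0 => i _; have /andP[] := f01 (nth 0 (take l sB) i).
apply: le_trans (_ : \prod_(0 <= i < k) (1 - h (nth 0 (take l sB) i)) <= _).
  rewrite -[X in _ <= X]mulr1; apply: ler_wpM2l => //.
  by apply: prodr_ile1 => i _; exact: f01.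
rewrite big_seq_cond [X in _ <= X]big_seq_cond; apply: ler_prod => i.
rewrite andbT mem_index_iota => /andP[_ ik].
rewrite !nth_take ?(leq_trans ik hkl) //; have /andP[-> _] := f01 (nth 0 sB i); rewrite /= lerB // h_mono //.
apply: nth_largest_le => //; exact: leq_trans ik hkA.
Qed.
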